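(* Let $n,t$ be positive integers and let $\mathcal{B}$ be a partition of $[n]=\{1,\ldots,n\}$ into $t$ nonempty blocks. For every nonempty $\mathcal{B}'\subseteq\mathcal{B}$ and every $\underline{i}\in[n]$, $$K[\underline{i},\mathcal{B}']=\min_{\underline{B}\in\mathcal{B}'}\Big\{\delta(\underline{i},\underline{B})+K[\omega(\underline{i},\underline{B})+_n1,\ \mathcal{B}'\setminus\{\underline{B}\}]\Big\},$$ where for the empty set one uses the convention $K[1,\varnothing]=0$ and $K[\underline{i},\varnothing]=1$ for $\underline{i}\neq1$. In particular, the minimum number of segments of a valid placement of $\mathcal{B}$, which is $K[1,\mathcal{B}]$, is computed by this recurrence.
   Context: Each block $B\in\mathcal{B}$ is written as an increasing sequence $\langle i_1<i_2<\cdots<i_\ell\rangle$ of its elements. Let $A(n)$ be the infinite sequence obtained by concatenating infinitely many copies of $\langle1,2,\ldots,n\rangle$. Each copy is called a segment, and the segments are numbered $1,2,3,\ldots$. A position of $A(n)$ is a pair $(\kappa,v)$ with segment index $\kappa\ge1$ and value $v\in[n]$. Positions are ordered lexicographically. For a nonempty $\mathcal{B}'\subseteq\mathcal{B}$, a placement of $\mathcal{B}'$ assigns to each element $x\in\bigcup_{B\in\mathcal{B}'}B$ a position $(\kappa_x,x)$ of $A(n)$, with distinct elements receiving distinct positions. A placement is valid if, for any two distinct blocks $B,C\in\mathcal{B}'$, no element of $B$ is placed strictly between the smallest and the largest positions occupied by elements of $C$. The number of segments used by a placement is the largest segment index $\kappa_x$ occurring in it. For $\underline{i}\in[n]$, $K[\underline{i},\mathcal{B}']$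 denotes the minimum number of segments used by a valid placement of $\mathcal{B}'$ in which every element is placed at a position $\ge(1,\underline{i})$. For $\underline{i}\in[n]$ and $B=\langle i_1<\cdots<i_\ell\rangle$: - If $\underline{i}\le i_1$ or $i_\ell<\underline{i}$, then $\omega(\underline{i},B)=i_\ell$. - Otherwise $i_l<\underline{i}\le i_{l+1}$ for a unique $l\in[\ell-1]$, and $\omega(\underline{i},B)=i_l$. $\delta(\underline{i},B)=0$ if $\underline{i}\le i_1$ and $i_\ell<n$, and $\delta(\underline{i},B)=1$ otherwise. $a+_n1$ denotes $a+1$ reduced modulo $n$, with result $0$ replaced by $n$; thus $a+_n1=a+1$ for $a<n$ and $n+_n1=1$. A valid placement of $\mathcal{B}$ corresponds to a solution of the Train Marshalling Problem: placing element $i$ in segment $\kappa$ means sending railcar $i$ to classification track $\kappa$. The minimum number of classification tracks therefore equals $K[1,\mathcal{B}]$. *)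

(* Defs.v *)
(* Elements of [n] = {1,...,n} are represented by x : 'I_n,
   with paper value  el x = x.+1  (so x = 0 represents element 1). *)
From Stdlib Require Import ClassicalEpsilon.
From mathcomp Require Import all_boot.
Set Implicit Arguments. Unset Strict Implicit. Unset Printing Implicit Defensive.

Section TMP.
Variable n : nat.

Definition el (x : 'I_n) : nat := x.+1.

Definition addn1_mod (a : nat) : nat :=
  let r := (a + 1) %% n in if r == 0 then n else r.

Definition bmax (B : {set 'I_n}) : nat := \max_(x in B) el x.

Definition omega (i : nat) (B : {set 'I_n}) : nat :=
  if [forall x in B, i <= el x] || (bmax B < i) then bmax B
  else \max_(x in B | el x < i) el x.

Definition delta (i : nat) (B : {set 'I_n}) : nat :=
  if [forall x in B, i <= el x] && (bmax B < n) then 0 else 1.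

(* positions (segment, value), lexicographic strict / non-strict order *)
Definition pos_lt (p q : nat * nat) : bool :=
  (p.1 < q.1) || ((p.1 == q.1) && (p.2 < q.2)).
Definition pos_le (p q : nat * nat) : bool :=
  (p.1 < q.1) || ((p.1 == q.1) && (p.2 <= q.2)).

(* a placement assigns the segment index kap x to element x, i.e. the position
   (kap x, el x); distinct elements get distinct positions automatically. *)
Definition pos (kap : 'I_n -> nat) (x : 'I_n) : nat * nat := (kap x, el x).

Definition valid_placement (Bs : {set {set 'I_n}}) (kap : 'I_n -> nat) : Prop :=
  (forall x, x \in cover Bs -> 1 <= kap x) /\
  (forall B C, B \in Bs -> C \in Bs -> B != C ->
     forall x, x \in B ->
       ~ (exists y1 y2, [/\ y1 \in C, y2 \in C,
                           pos_lt (pos kap y1) (pos kap x) &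
                           pos_lt (pos kap x) (pos kap y2)])).

Definition segments (Bs : {set {set 'I_n}}) (kap : 'I_n -> nat) : nat :=
  \max_(x in cover Bs) kap x.

Definition feasible (i : nat) (Bs : {set {set 'I_n}}) (k : nat) : Prop :=
  exists kap : 'I_n -> nat,
    [/\ valid_placement Bs kap,
        (forall x, x \in cover Bs -> pos_le (1, i) (pos kap x)) &
        segments Bs kap = k].

Definition feasibleb (i : nat) (Bs : {set {set 'I_n}}) (k : nat) : bool :=
  if excluded_middle_informative (feasible i Bs k) then true else false.

Lemma feasibleb_ex (i : nat) (Bs : {set {set 'I_n}}) :
  (exists k, feasible i Bs k) -> exists k, feasibleb i Bs k.
Proof.
case=> k Hk; exists k; rewrite /feasibleb.
by case: excluded_middle_informative.
Qed.

(* K[i, Bs] : minimum number of segments of a valid placement of Bs with all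
   positions >= (1, i).  (The fallback 0 is never used when Bs is a nonempty
   set of blocks, since a valid placement always exists.) *)
Definition Kseg (i : nat) (Bs : {set {set 'I_n}}) : nat :=
  match excluded_middle_informative (exists k, feasible i Bs k) with
  | left h => ex_minn (feasibleb_ex h)
  | right _ => 0
  end.

Definition Kext (i : nat) (Bs : {set {set 'I_n}}) : nat :=
  if Bs == set0 then (if i == 1 then 0 else 1) else Kseg i Bs.

End TMP.

(* Main.v *)
Require Import Defs.
From mathcomp Require Import all_boot.
From mathcomp Require Import zify.
From Stdlib Require Import ClassicalEpsilon.
Set Implicit Arguments. Unset Strict Implicit. Unset Printing Implicit Defensive.

Section Proofs.
Variable n : nat.
Implicit Types (Bs : {set {set 'I_n}}) (Bu : {set 'I_n}).

Lemma el_le (x : 'I_n) : 1 <= el x <= n.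
Proof. rewrite /el; have := ltn_ord x; lia. Qed.

Lemma el_inj (x y : 'I_n) : el x = el y -> x = y.
Proof. rewrite /el => -[] h; exact: val_inj. Qed.

Lemma Kseg_spec i Bs : (exists k, feasible i Bs k) ->
  feasible i Bs (Kseg i Bs) /\ forall k, feasible i Bs k -> Kseg i Bs <= k.
Proof.
move=> ex; rewrite /Kseg; case: excluded_middle_informative => // h.
case: ex_minnP => m Hm Hmin; split.
  by move: Hm; rewrite /feasibleb; case: excluded_middle_informative.
move=> k Hk; apply: Hmin; rewrite /feasibleb; by case: excluded_middle_informative.
Qed.

Lemma in_cover x Bs : reflect (exists2 C, C \in Bs & x \in C) (x \in cover Bs).
Proof. rewrite /cover; apply: (iffP bigcupP) => [[C]|[C]]; by exists C. Qed.

Lemma disj_notin Bs B C x : trivIset Bs -> B \in Bs -> C \in Bs -> B != C ->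
  x \in C -> x \notin B.
Proof. move=> /trivIsetP tI HB HC ne xC; by rewrite (disjointFl (tI _ _ HB HC ne) xC). Qed.

Lemma cover_rest Bs Bu x : x \in cover Bs -> x \notin Bu -> x \in cover (Bs :\ Bu).
Proof.
move=> /in_cover [C HC xC] xnB; apply/in_cover; exists C => //.
rewrite in_setD1 HC andbT; apply: contraNneq xnB => <-; done.
Qed.

Lemma cover_rest_inv Bs Bu x : trivIset Bs -> Bu \in Bs ->
  x \in cover (Bs :\ Bu) -> x \in cover Bs /\ x \notin Bu.
Proof.
move=> tI BuB /in_cover [C]; rewrite in_setD1 => /andP[ne CB] xC; split.
  by apply/in_cover; exists C.
apply: (disj_notin tI BuB CB _ xC); by rewrite eq_sym.
Qed.

Lemma bmax_spec Bu : Bu != set0 ->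
  (exists2 z, z \in Bu & el z = bmax Bu) /\ forall x, x \in Bu -> el x <= bmax Bu.
Proof.
move=> ne; split; last by move=> x xB; exact: leq_bigmax_cond.
have : 0 < #|Bu| by rewrite card_gt0.
move=> /(eq_bigmax_cond (@el n)) [z zB E]; exists z => //; by rewrite /bmax E.
Qed.

Lemma omega_spec i Bu : Bu != set0 -> i <= n ->
  (exists2 z, z \in Bu & el z = omega i Bu) /\
  [\/ [/\ delta i Bu = 0, omega i Bu < n & forall x, x \in Bu -> i <= el x <= omega i Bu],
      [/\ delta i Bu = 1, omega i Bu = n & forall x, x \in Bu -> i <= el x]
    | [/\ delta i Bu = 1, omega i Bu < i & forall x, x \in Bu -> el x < i -> el x <= omega i Bu]].
Proof.
move=> ne lein; have [[zm zmB zmE] bmx] := bmax_spec ne.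
rewrite /omega /delta.
case: (boolP [forall x in Bu, i <= el x]) => [Hall' | Hnall] /=.
  have Hall := (forall_inP Hall').
  split; first by exists zm.
  case: (ltnP (bmax Bu) n) => Hb /=.
    by apply: Or31; split => // x xB; rewrite Hall // bmx.
  apply: Or32; split => //. have := el_le zm; lia.
case: (ltnP (bmax Bu) i) => Hb /=.
  split; first by exists zm.
  apply: Or33; split => // x xB _; exact: bmx.
move: Hnall => /forall_inPn [x0 x0B]; rewrite -ltnNge => x0lt.
set A := [pred x | (x \in Bu) && (el x < i)].
have cA : 0 < #|A| by apply/card_gt0P; exists x0; rewrite inE /= x0B x0lt.
have [z zA zE] := eq_bigmax_cond (@el n) cA.
have zE' : \max_(x in Bu | el x < i) el x = el z by rewrite -zE; apply: eq_bigl => x; rewrite inE.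
rewrite zE'; move: zA; rewrite inE /= => /andP[zB zlt].
split; first by exists z.
apply: Or33; split => // x xB xlt; rewrite -zE'.
apply: (@leq_bigmax_cond _ (fun x => (x \in Bu) && (el x < i))); by rewrite xB xlt.
Qed.

Lemma addn1_mod_spec w : 1 <= w <= n -> addn1_mod n w = if w < n then w.+1 else 1.
Proof.
move=> /andP[w1 wn]; rewrite /addn1_mod.
case: (ltnP w n) => h.
  case: (ltnP w.+1 n) => h2.
    by rewrite addn1 modn_small // ; case: eqP.
  have -> : w + 1 = n by lia.
  rewrite modnn eqxx; lia.
have -> : w = n by lia.
rewrite modnDl.
case: (ltnP 1 n) => h2; first by rewrite modn_small.
have -> : n = 1 by lia.
done.
Qed.

Lemma code_le a b v w m : v < m -> w < m -> a * m + v <= b * m + w ->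
  (a < b) || ((a == b) && (v <= w)).
Proof.
move=> vm wm h; case: (ltngtP a b) => // [ba|ab]; last by subst; rewrite /=; lia.
have : b.+1 * m <= a * m by rewrite leq_mul2r ba orbT.
lia.
Qed.


Lemma lt_asym (p q : nat * nat) : pos_lt p q -> ~~ pos_lt q p.
Proof. case: p => a b; case: q => c e; rewrite /pos_lt /=; lia. Qed.

Lemma le_lt_pos (p q r : nat * nat) : pos_le p q -> pos_lt q r -> pos_le p r.
Proof. case: p => ? ?; case: q => ? ?; case: r => ? ?; rewrite /pos_lt /pos_le /=; lia. Qed.

Lemma shift_lt a b v w d : pos_lt (a + d, v) (b + d, w) -> pos_lt (a, v) (b, w).
Proof. rewrite /pos_lt /=; lia. Qed.

Lemma shift_lt_sub a b v w d : d < a -> d < b -> pos_lt (a - d, v) (b - d, w) -> pos_lt (a, v) (b, w).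
Proof. rewrite /pos_lt /=; lia. Qed.

Lemma pos_lt_of_le a b v w : pos_le (a, v) (b, w) -> v != w -> pos_lt (a, v) (b, w).
Proof. rewrite /pos_lt /pos_le /=; lia. Qed.

Lemma pos_lt_tot a b v w : v != w -> ~~ pos_lt (a, v) (b, w) -> pos_lt (b, w) (a, v).
Proof. rewrite /pos_lt /=; lia. Qed.

Definition OC (i d w e : nat) := (d = 0 /\ w < n /\ i <= e /\ e <= w) \/
  (d = 1 /\ w = n /\ i <= e) \/ (d = 1 /\ w < i /\ (i <= e \/ e <= w)).

Lemma arithU i d w e : i <= n -> 1 <= w <= n -> OC i d w e ->
  [/\ (if i <= e then 1 else 2) <= 1 + d, d <= 1,
      (forall a v, 1 <= a -> pos_le (1, if w < n then w.+1 else 1) (a, v) ->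
          pos_lt (if i <= e then 1 else 2, e) (a + d, v))
    & (if i <= e then 1 else 2) <= d + (if w < n then 1 else 0)].
Proof.
rewrite /OC /pos_le /pos_lt /= => h1 h2 hc.
case: (ltnP w n) => h3; case: (leqP i e) => h4 /=; split. all: try lia. all: move=> a v; lia.
Qed.

Lemma g_le i e : pos_le (1, i) (if i <= e then 1 else 2, e).
Proof. rewrite /pos_le /=; case: (leqP i e) => h /=; lia. Qed.

Definition OCw (i d w : nat) := (d = 0 /\ w < n) \/ (d = 1 /\ w = n) \/ (d = 1 /\ w < i).

Lemma arithL i d w kz : i <= n -> 1 <= w <= n -> OCw i d w -> 1 <= kz ->
  pos_le (1, i) (kz, w) ->
  [/\ d <= 1, (forall a v, 1 <= v <= n -> pos_lt (kz, w) (a, v) ->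
                d < a /\ pos_le (1, if w < n then w.+1 else 1) (a - d, v))
    & (forall K, kz <= K -> d + (if w < n then 1 else 0) <= K)].
Proof.
rewrite /OCw /pos_le /pos_lt /= => h1 h2 hc h3 h4.
case: (ltnP w n) => h5 /=; split. all: try lia. all: move=> a v; lia.
Qed.

Lemma E1 w : 1 <= w -> (if (if w < n then w.+1 else 1) == 1 then 0 else 1) = (if w < n then 1 else 0).
Proof. move=> w1; case: (ltnP w n) => h; case: eqP => //; lia. Qed.

Lemma omega_OC i Bu : Bu != set0 -> i <= n ->
  (exists2 z, z \in Bu & el z = omega i Bu) /\
  OCw i (delta i Bu) (omega i Bu) /\
  forall x, x \in Bu -> OC i (delta i Bu) (omega i Bu) (el x).
Proof.
move=> ne lein; have [zz Hc] := omega_spec ne lein; split => //.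
rewrite /OC /OCw; case: Hc => [[-> wn H]|[-> wn H]|[-> wi H]]; split.
- by left.
- by move=> x xB; left; have := H x xB; move=> /andP[a b].
- by right; left.
- by move=> x xB; right; left; have := H x xB.
- by right; right.
- move=> x xB; right; right; split => //; split => //.
  case: (leqP i (el x)) => h; [by left | by right; apply: H].
Qed.

Definition good Bs := trivIset Bs && (set0 \notin Bs).

Lemma good_rest Bs Bu : good Bs -> good (Bs :\ Bu).
Proof.
move=> /andP[tI n0]; apply/andP; split.
  exact: trivIsetS (subsetDl _ _) tI.
by rewrite in_setD1 negb_and n0 orbT.
Qed.

Lemma nx_range i Bu : Bu != set0 -> i <= n -> 1 <= addn1_mod n (omega i Bu) <= n.
Proof.
move=> ne lein; have [[z zB zE] _] := omega_spec ne lein.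
have := el_le z; rewrite zE => hw; rewrite addn1_mod_spec //; case: ifP; lia.
Qed.

Lemma upper i Bs Bu : good Bs -> Bu \in Bs -> i <= n ->
  (Bs :\ Bu = set0 \/ exists k, feasible (addn1_mod n (omega i Bu)) (Bs :\ Bu) k) ->
  exists2 k, feasible i Bs k & k <= delta i Bu + Kext (addn1_mod n (omega i Bu)) (Bs :\ Bu).
Proof.
move=> gB BuB lein; move: (gB) => /andP[tI n0].
have Bune : Bu != set0 by apply: contraNneq n0 => <-.
have [[z zB zE] [_ Hx]] := omega_OC Bune lein.
move: Hx zE; set d := delta i Bu; set w := omega i Bu => Hx zE.
have wr : 1 <= w <= n by rewrite -zE el_le.
have w1 : 1 <= w by case/andP: wr.
rewrite addn1_mod_spec //.
set nx := (if w < n then w.+1 else 1).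
set rest := Bs :\ Bu => Hr.
have [kapr [Hr1 Hr2 Hr3 Hr4]] : exists kapr : 'I_n -> nat,
   [/\ forall y, y \in cover rest -> 1 <= kapr y,
       forall y, y \in cover rest -> pos_le (1, nx) (pos kapr y),
       forall y, y \in cover rest -> kapr y <= Kext nx rest &
       (forall B C, B \in rest -> C \in rest -> B != C -> forall x, x \in B ->
          ~ (exists y1 y2, [/\ y1 \in C, y2 \in C, pos_lt (pos kapr y1) (pos kapr x) &
                                pos_lt (pos kapr x) (pos kapr y2)]))].
  case: (eqVneq rest set0) => [r0|rne].
    exists (fun _ => 0); rewrite r0; split; try by move=> y /in_cover [C]; rewrite inE.
    by move=> B C; rewrite inE.
  have ex : exists k, feasible nx rest k by case: Hr => // r0; rewrite r0 eqxx in rne.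
  have [[kapr [[V1 V2] P1 S1]] _] := Kseg_spec ex.
  exists kapr; split => //.
  move=> y yc; rewrite /Kext (negbTE rne) -S1 /segments; exact: leq_bigmax_cond.
have Kpos : rest != set0 -> 1 <= Kext nx rest.
  move=> /set0Pn [C CR]; have CB : C \in Bs by move: CR; rewrite in_setD1 => /andP[].
  have : C != set0 by apply: contraNneq n0 => <-.
  move=> /set0Pn [y yC]; have yc : y \in cover rest by apply/in_cover; exists C.
  exact: leq_trans (Hr1 _ yc) (Hr3 _ yc).
pose g := fun x : 'I_n => if i <= el x then 1 else 2.
have AU : forall x, x \in Bu -> [/\ g x <= 1 + d, d <= 1,
      (forall a v, 1 <= a -> pos_le (1, nx) (a, v) -> pos_lt (g x, el x) (a + d, v))
    & g x <= d + (if w < n then 1 else 0)].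
  move=> x xB; exact: arithU lein wr (Hx x xB).
pose kap := fun x : 'I_n => if x \in Bu then g x else kapr x + d.
have Hord : forall x y, x \in Bu -> y \in cover rest -> pos_lt (pos kap x) (pos kap y).
  move=> x y xB yc; have [_ ynB] := cover_rest_inv tI BuB yc.
  rewrite /pos /kap xB (negbTE ynB); have [_ _ h3 _] := AU x xB.
  apply: h3; [exact: Hr1 | exact: Hr2].
have Hg1 : forall x, x \in Bu -> pos_le (1, i) (pos kap x).
  move=> x xB; rewrite /pos /kap xB; exact: g_le.
exists (segments Bs kap).
  exists kap; split; [split| |by []].
  - move=> x xc; rewrite /kap; case: ifP => xB; first by rewrite /g; case: ifP.
    by rewrite addn_gt0 (Hr1 _ (cover_rest xc (negbT xB))).
  - move=> B C BB CB neBC x xB [y1 [y2 [y1C y2C lt1 lt2]]].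
    case: (eqVneq B Bu) => [eB|neB].
      subst B. have y1c : y1 \in cover rest.
        by apply/in_cover; exists C => //; rewrite in_setD1 CB andbT eq_sym.
      by have := lt_asym lt1; rewrite (Hord x y1 xB y1c).
    case: (eqVneq C Bu) => [eC|neC].
      subst C. have xc : x \in cover rest.
        by apply/in_cover; exists B => //; rewrite in_setD1 neB BB.
      by have := lt_asym lt2; rewrite (Hord y2 x y2C xc).
    have BR : B \in rest by rewrite in_setD1 neB BB.
    have CR : C \in rest by rewrite in_setD1 neC CB.
    have xnB : x \notin Bu by apply: (disj_notin tI BuB BB _ xB); rewrite eq_sym.
    have y1n : y1 \notin Bu by apply: (disj_notin tI BuB CB _ y1C); rewrite eq_sym.
    have y2n : y2 \notin Bu by apply: (disj_notin tI BuB CB _ y2C); rewrite eq_sym.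
    apply: (Hr4 B C BR CR neBC x xB); exists y1, y2; split => //.
      by move: lt1; rewrite /pos /kap (negbTE xnB) (negbTE y1n); exact: shift_lt.
    by move: lt2; rewrite /pos /kap (negbTE xnB) (negbTE y2n); exact: shift_lt.
  - move=> x xc; case: (boolP (x \in Bu)) => xB; first exact: Hg1.
    exact: le_lt_pos (Hg1 z zB) (Hord z x zB (cover_rest xc xB)).
apply/bigmax_leqP => x xc.
rewrite /kap; case: ifP => xB.
  have [h1 _ _ h4] := AU x xB.
  case: (eqVneq rest set0) => [r0|rne].
    by rewrite r0 /Kext eqxx /nx E1.
  apply: leq_trans h1 _; rewrite [1 + d]addnC leq_add2l; exact: Kpos rne.
rewrite addnC leq_add2l; exact: Hr3 x (cover_rest xc (negbT xB)).
Qed.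

Lemma lower i Bs K : good Bs -> Bs != set0 -> i <= n -> feasible i Bs K ->
  exists2 Bu, Bu \in Bs & delta i Bu + Kext (addn1_mod n (omega i Bu)) (Bs :\ Bu) <= K.
Proof.
move=> gB ne lein [kap [[V1 V2] P1 S1]]; move: (gB) => /andP[tI n0].
have Kb : forall x, x \in cover Bs -> kap x <= K.
  by move=> x xc; rewrite -S1; exact: leq_bigmax_cond.
have /set0Pn [C0 C0B] := ne.
have /set0Pn [x1 x1C] : C0 != set0 by apply: contraNneq n0 => <-.
have x1c : x1 \in cover Bs by apply/in_cover; exists C0.
pose code := fun x : 'I_n => kap x * n.+1 + el x.
case: (@arg_minnP _ x1 [pred x | x \in cover Bs] code x1c) => x0 x0c x0min.
have /in_cover [Bu BuB x0B] := x0c.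
exists Bu => //.
have Bune : Bu != set0 by apply/set0Pn; exists x0.
have [[z zB zE] [Hw _]] := omega_OC Bune lein.
move: Hw zE; set d := delta i Bu; set w := omega i Bu => Hw zE.
have wr : 1 <= w <= n by rewrite -zE el_le.
have w1 : 1 <= w by case/andP: wr.
rewrite addn1_mod_spec //.
set nx := (if w < n then w.+1 else 1).
set rest := Bs :\ Bu.
have zc : z \in cover Bs by apply/in_cover; exists Bu.
have Pz : pos_le (1, i) (kap z, w) by rewrite -zE; exact: P1 z zc.
have [d1 AL2 AL3] := arithL lein wr Hw (V1 z zc) Pz.
have key : forall y, y \in cover rest -> pos_lt (kap z, w) (pos kap y).
  move=> y /in_cover [C]; rewrite in_setD1 => /andP[CnBu CB] yC.
  have yc : y \in cover Bs by apply/in_cover; exists C.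
  have ynB : y \notin Bu by apply: (disj_notin tI BuB CB _ yC); rewrite eq_sym.
  have yz : el z != el y by apply: contraNneq ynB => /el_inj <-.
  have yx0 : el x0 != el y by apply: contraNneq ynB => /el_inj <-.
  have c0 : pos_lt (pos kap x0) (pos kap y).
    apply: pos_lt_of_le yx0; have := x0min y yc; rewrite /code => h.
    apply: code_le h; rewrite ltnS.
      by case/andP: (el_le x0).
    by case/andP: (el_le y).
  rewrite -zE; case: (boolP (pos_lt (kap z, el z) (pos kap y))) => // hzy.
  exfalso; have hyz := pos_lt_tot yz hzy.
  apply: (V2 C Bu CB BuB CnBu y yC); exists x0, z; split => //.
have G : forall y, y \in cover rest -> d < kap y /\ pos_le (1, nx) (kap y - d, el y).
  move=> y yc; exact: AL2 (el_le y) (key y yc).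
case: (eqVneq rest set0) => [r0|rne].
  rewrite r0 /Kext eqxx /nx E1 //; exact: AL3 (Kb z zc).
pose kapr := fun y : 'I_n => kap y - d.
have fr : feasible nx rest (segments rest kapr).
  exists kapr; split; [split| |by []].
  - by move=> y yc; have [h _] := G y yc; rewrite /kapr subn_gt0.
  - move=> B C BR CR neBC x xB [y1 [y2 [y1C y2C lt1 lt2]]].
    have BB : B \in Bs by move: BR; rewrite in_setD1 => /andP[].
    have CB : C \in Bs by move: CR; rewrite in_setD1 => /andP[].
    have xc : x \in cover rest by apply/in_cover; exists B.
    have y1c : y1 \in cover rest by apply/in_cover; exists C.
    have y2c : y2 \in cover rest by apply/in_cover; exists C.
    apply: (V2 B C BB CB neBC x xB); exists y1, y2; split => //.
      apply: (@shift_lt_sub _ _ _ _ d) lt1; [exact: (G y1 y1c).1 | exact: (G x xc).1].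
    apply: (@shift_lt_sub _ _ _ _ d) lt2; [exact: (G x xc).1 | exact: (G y2 y2c).1].
  - by move=> y yc; case: (G y yc).
have Kr : Kseg nx rest <= segments rest kapr.
  by have [_ h] := Kseg_spec (ex_intro _ _ fr); apply: h.
have Sr : segments rest kapr <= K - d.
  apply/bigmax_leqP => y yc; rewrite /kapr leq_sub2r //.
  by have [yc' _] := cover_rest_inv tI BuB yc; exact: Kb.
rewrite /Kext (negbTE rne).
have K1 : 1 <= K := leq_trans (V1 z zc) (Kb z zc).
have := leq_trans Kr Sr; move: (Kseg nx rest) => k hk.
by rewrite -(subnKC (leq_trans d1 K1)) leq_add2l.
Qed.

Lemma exists_feasible Bs : good Bs -> Bs != set0 -> forall i, i <= n -> exists k, feasible i Bs k.
Proof.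
move: {2}#|Bs| (leqnn #|Bs|) => m; elim: m Bs => [|m IH] Bs cB gB ne i lein.
  by move: cB; rewrite leqn0 cards_eq0 (negbTE ne).
have /set0Pn [Bu BuB] := ne.
have Bune : Bu != set0 by move: gB => /andP[_ n0]; apply: contraNneq n0 => <-.
suff H : Bs :\ Bu = set0 \/ exists k, feasible (addn1_mod n (omega i Bu)) (Bs :\ Bu) k.
  by have [k fk _] := upper gB BuB lein H; exists k.
case: (eqVneq (Bs :\ Bu) set0) => [r0|rne]; [by left|right].
apply: IH => //.
- by move: cB; rewrite (cardsD1 Bu Bs) BuB add1n ltnS.
- exact: good_rest.
- by case/andP: (nx_range Bune lein).
Qed.

End Proofs.

Theorem mainTheorem2 (n t : nat) (B : {set {set 'I_n}}) :
  0 < n -> 0 < t ->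
  partition B [set: 'I_n] -> #|B| = t ->
  forall (B' : {set {set 'I_n}}), B' \subset B -> B' != set0 ->
  forall i : nat, 1 <= i <= n ->
    (exists2 Bu, Bu \in B' &
       Kseg i B' = delta i Bu + Kext (addn1_mod n (omega i Bu)) (B' :\ Bu)) /\
    (forall Bu, Bu \in B' ->
       Kseg i B' <= delta i Bu + Kext (addn1_mod n (omega i Bu)) (B' :\ Bu)).
Proof.
move=> n0 t0 /and3P[_ tI n0B] _ B' sub ne i /andP[i1 iN].
have gB' : good B'.
  rewrite /good (trivIsetS sub tI) /=; apply: contra n0B; exact: (subsetP sub).
have ex := exists_feasible gB' ne iN.
have [Hf Hmin] := Kseg_spec ex.
have part2 : forall Bu, Bu \in B' ->
    Kseg i B' <= delta i Bu + Kext (addn1_mod n (omega i Bu)) (B' :\ Bu).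
  move=> Bu BuB.
  have Bune : Bu != set0 by apply: contraNneq n0B => <-; exact: (subsetP sub).
  suff H : B' :\ Bu = set0 \/ exists k, feasible (addn1_mod n (omega i Bu)) (B' :\ Bu) k.
    by have [k fk kle] := upper gB' BuB iN H; exact: leq_trans (Hmin _ fk) kle.
  case: (eqVneq (B' :\ Bu) set0) => [r0|rne]; [by left|right].
  apply: exists_feasible => //; first exact: good_rest.
  by case/andP: (nx_range Bune iN).
split => //.
have [Bu BuB le] := lower gB' ne iN Hf.
by exists Bu => //; apply/eqP; rewrite eqn_leq part2 // le.
Qed.
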